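(* Let $P_n$ be the path with vertices $x_1,\dots,x_n$ and edges $\{x_i,x_{i+1}\}$ ($1\le i\le n-1$). Then no stable set corresponding to $v(P_n)$ contains both endpoints $x_1$ and $x_n$.
   Context: Let $K$ be a field and $S=K[x_1,\dots,x_n]$ standard graded. For a proper graded ideal $I$, the $v$-number is $v(I)=\min\{k\ge 0 : \exists f\in S_k,\ \mathcal P\in\operatorname{Ass}(S/I) \text{ with } (I:f)=\mathcal P\}$. For a graph $G$, $I(G)$ is its edge ideal (generated by $x_ix_j$ over edges $\{x_i,x_j\}$) and $v(G):=v(I(G))$. A set $A$ of vertices is stable if it contains no edge. For a stable set $A$, its neighbour set is $N_G(A)=\{x\in V(G) : \{x\}\cup A \text{ contains an edge of } G\}$. A vertex cover is a set of vertices meeting every edge; it is minimal if minimal under inclusion. Let $\mathcal A_G$ be the collection of stable sets $A$ of $G$ such that $N_G(A)$ is a minimal vertex cover of $G$; it is known that $v(G)=\min\{|A| : A\in\mathcal A_G\}$. A stable set corresponding to $v(G)$ is an $A\in\mathcal A_G$ with $|A|=v(G)$. *)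

(* Defs.v *)
From mathcomp Require Import all_boot.
Set Implicit Arguments. Unset Strict Implicit. Unset Printing Implicit Defensive.

Section Graphs.
Variable T : finType.
Variable e : rel T.

Definition has_edge (A : {set T}) : bool :=
  [exists x in A, exists y in A, e x y].

Definition stable (A : {set T}) : bool := ~~ has_edge A.

Definition nbhd (A : {set T}) : {set T} := [set x | has_edge (x |: A)].

Definition vertex_cover (C : {set T}) : bool :=
  [forall x, forall y, e x y ==> (x \in C) || (y \in C)].

Definition min_vertex_cover (C : {set T}) : bool :=
  vertex_cover C && [forall D : {set T}, (D \proper C) ==> ~~ vertex_cover D].

Definition calA (A : {set T}) : bool := stable A && min_vertex_cover (nbhd A).

(* A is a stable set corresponding to v(G) = min {|A| : A in A_G} *)
Definition v_stable_set (A : {set T}) : Prop :=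
  calA A /\ forall B : {set T}, calA B -> #|A| <= #|B|.
End Graphs.

(* The path P_{n+1} on vertices 'I_(n+1): x_{i+1} is the ordinal i;
   edges {i, i+1}. *)
Definition path_rel (n : nat) : rel 'I_n.+1 :=
  fun i j => (i.+1 == j :> nat) || (j.+1 == i :> nat).
Arguments path_rel : clear implicits.

(* Main.v *)
Require Import Defs.
From mathcomp Require Import all_boot.
From mathcomp Require Import zify.
Set Implicit Arguments. Unset Strict Implicit. Unset Printing Implicit Defensive.

Section Gen.
Variable T : finType.
Variable e : rel T.
Hypothesis irr : irreflexive e.

Lemma has_edgeP (A : {set T}) :
  reflect (exists x y, [/\ x \in A, y \in A & e x y]) (has_edge e A).
Proof.
apply: (iffP existsP).
- by move=> [x /andP[xA /existsP[y /andP[yA exy]]]]; exists x, y.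
- move=> [x [y [xA yA exy]]]; exists x; rewrite xA /=.
  by apply/existsP; exists y; rewrite yA.
Qed.

Lemma nbhdP (B : {set T}) x : stable e B ->
  (x \in nbhd e B) <-> exists2 b, b \in B & (e x b || e b x).
Proof.
move=> sB; rewrite inE; split.
- move/has_edgeP=> [u [v [Hu Hv Huv]]].
  move: Hu Hv; rewrite !in_setU1 => /orP[/eqP Eu|Hu] /orP[/eqP Ev|Hv].
  + by move: Huv; rewrite Eu Ev irr.
  + by exists v => //; rewrite -Eu Huv.
  + by exists u => //; rewrite -Ev Huv orbT.
  + by move/negP: sB; case; apply/has_edgeP; exists u, v.
- move=> [b Hb H]; apply/has_edgeP; case/orP: H => H.
  + by exists x, b; rewrite !in_setU1 eqxx Hb orbT.
  + by exists b, x; rewrite !in_setU1 eqxx Hb orbT.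
Qed.

Lemma calA_of (B : {set T}) : stable e B -> vertex_cover e (nbhd e B) -> calA e B.
Proof.
rewrite /calA /min_vertex_cover => sB vc; rewrite sB vc /=.
apply/forallP => D; apply/implyP => /properP [sub [x Hx HxD]].
apply/negP => vcD.
have [b Hb Hxb] := (nbhdP x sB).1 Hx.
have bD : b \in D.
  move/forallP: vcD => vcD.
  case/orP: Hxb => H.
  - by move/forallP: (vcD x) => /(_ b) /implyP /(_ H); rewrite (negbTE HxD).
  - by move/forallP: (vcD b) => /(_ x) /implyP /(_ H); rewrite (negbTE HxD) orbF.
have := (subsetP sub) b bD.
move/(nbhdP b sB) => [b' Hb' H].
move/negP: sB; apply; apply/has_edgeP.
case/orP: H => H; [exists b, b' | exists b', b]; by [].
Qed.
End Gen.

Theorem lemma3p3 (n : nat) (A : {set 'I_n.+1}) :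
  v_stable_set (path_rel n) A -> ~ ((@ord0 n \in A) /\ (@ord_max n \in A)).
Proof.
move=> [cA minA] [A0 An].
have /andP[sA /andP[vcA _]] := cA.
have irr : irreflexive (path_rel n).
  by move=> x; rewrite /path_rel; apply/negbTE/negP; lia.
have win : forall i : 'I_n.+1, exists2 a : 'I_n.+1, a \in A & (i - 3 <= a <= i).
  move=> i; case: (leqP i 2) => hi.
    by exists ord0 => //=; apply/andP; split; lia.
  have hi' := ltn_ord i.
  move/forallP: vcA => /(_ (inord (i - 2))) /forallP /(_ (inord (i - 1))).
  rewrite /path_rel !inordK; try lia.
  move=> /implyP H.
  have {H} : (inord (i - 2) : 'I_n.+1) \in nbhd (path_rel n) A
     \/ (inord (i - 1) : 'I_n.+1) \in nbhd (path_rel n) A.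
    by apply/orP; apply: H; apply/orP; left; apply/eqP; lia.
  case => /(nbhdP irr _ sA) [a Ha H]; exists a => //; move: H;
    rewrite /path_rel !inordK; lia.
have hA' : forall a : 'I_n.+1, a \in A :\ ord_max -> a.+2 <= n.
  move=> a; rewrite !inE => /andP[ne aA].
  have an : (a : nat) != n.
    by apply: contra ne => /eqP H; apply/eqP; apply: val_inj.
  have := ltn_ord a.
  case E: (a.+1 == n); last by lia.
  move/negP: sA; case; apply/has_edgeP; exists a, ord_max.
  by rewrite /path_rel /= E.
pose f (a : 'I_n.+1) : 'I_n.+1 := inord a.+2.
have fE : forall a, a \in A :\ ord_max -> (f a : nat) = a.+2.
  by move=> a Ha; rewrite /f inordK // ltnS hA'.
pose B := f @: (A :\ ord_max).
have sB : stable (path_rel n) B.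
  apply/negP => /has_edgeP [u [v [/imsetP[a Ha ->] /imsetP[b Hb ->] Huv]]].
  move: Huv; rewrite /path_rel (fE a Ha) (fE b Hb) => H.
  move/negP: sA; apply; apply/has_edgeP; exists a, b.
  move: Ha Hb; rewrite !inE => /andP[_ ->] /andP[_ ->]; split => //.
have key : forall x y : 'I_n.+1, x.+1 = y ->
    (x \in nbhd (path_rel n) B) || (y \in nbhd (path_rel n) B).
  move=> x y Hxy.
  have [a Ha Hw] := win x.
  have Ha' : a \in A :\ ord_max.
    rewrite !inE Ha andbT; apply/negP => /eqP Ea.
    have := ltn_ord y; move: Hw; rewrite Ea /=; lia.
  have fa := fE a Ha'.
  have fB : f a \in B by apply: imset_f.
  case E: [|| (f a : nat) == x.-1 | (f a : nat) == x.+1].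
    apply/orP; left; apply/(nbhdP irr _ sB); exists (f a) => //.
    rewrite /path_rel; move: E; lia.
  apply/orP; right; apply/(nbhdP irr _ sB); exists (f a) => //.
  rewrite /path_rel; move: E; lia.
have cB : calA (path_rel n) B.
  apply: calA_of => //.
  apply/forallP=> x; apply/forallP=> y; apply/implyP => /orP[/eqP H|/eqP H].
  - exact: key.
  - by rewrite orbC; apply: key.
have := minA B cB.
have := leq_imset_card f (A :\ ord_max).
have := cardsD1 ord_max A; rewrite An /= add1n.
rewrite -/B => -> h1 h2.
by move: (leq_trans h2 h1); rewrite ltnn.
Qed.
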